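(* Let $G$ be a group that is abelian or locally finite, $H$ a group, and $\phi,\psi\in\mathrm{Hom}(H,G)$. Then $\phi^*\circ\tau\neq\psi^*\circ\tau$ for every non-constant $\tau\in\mathrm{CA}(A^G)$ if and only if $\Delta(\phi,\psi)$ is infinite.
   Context: $A$ is a finite set with $|A|\ge 2$. $A^G$ is the set of functions $G\to A$ with shift action $(g\cdot x)(k):=x(g^{-1}k)$. $\mathrm{CA}(A^G)$ is the set of maps $\tau:A^G\to A^G$ for which there exist finite $T\subseteq G$ and $\mu:A^T\to A$ with $\tau(x)(g)=\mu((g^{-1}\cdot x)|_T)$ for all $x,g$. $\phi^*:A^G\to A^H$, $\phi^*(x):=x\circ\phi$. $\Delta(\phi,\psi):=\{\psi(h)^{-1}\phi(h):h\in H\}$. A group is locally finite if every finitely generated subgroup is finite. *)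

(* Defs.v *)
(* Groups are mathcomp's (possibly infinite) [groupType]
   from boot/monoid.v; group homomorphisms are multiplicative maps. *)
From HB Require Import structures.
From mathcomp Require Import all_boot.
Set Implicit Arguments. Unset Strict Implicit. Unset Printing Implicit Defensive.
Local Open Scope group_scope.

Definition finite_set (T : eqType) (S : T -> Prop) : Prop :=
  exists s : seq T, forall t, S t -> t \in s.

Definition is_hom (H G : groupType) (f : H -> G) : Prop :=
  forall x y : H, f (x * y) = f x * f y.

Inductive generated (G : groupType) (s : seq G) : G -> Prop :=
  | gen_in : forall g, g \in s -> generated s g
  | gen_one : generated s 1
  | gen_mul : forall g h, generated s g -> generated s h -> generated s (g * h)
  | gen_inv : forall g, generated s g -> generated s (g^-1).

Definition abelian_group (G : groupType) : Prop :=
  forall x y : G, x * y = y * x.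

Definition locally_finite (G : groupType) : Prop :=
  forall s : seq G, finite_set (generated s).

Definition shift (G : groupType) (A : Type) (g : G) (x : G -> A) : G -> A :=
  fun k => x (g^-1 * k).

Definition is_CA (G : groupType) (A : Type) (tau : (G -> A) -> (G -> A)) : Prop :=
  exists (T : G -> Prop) (mu : ({t : G | T t} -> A) -> A),
    finite_set T /\
    forall (x : G -> A) (g : G),
      tau x g = mu (fun t => shift (g^-1) x (proj1_sig t)).

Definition pullback (H G : groupType) (A : Type) (phi : H -> G) (x : G -> A) : H -> A :=
  fun h => x (phi h).

Definition is_constant (X Y : Type) (f : X -> Y) : Prop :=
  exists c : Y, forall x, f x = c.

Definition Delta (H G : groupType) (phi psi : H -> G) : G -> Prop :=
  fun g => exists h : H, g = (psi h)^-1 * phi h.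

(* Main.v *)
Require Import Defs.
From Stdlib Require Import Classical ClassicalDescription FunctionalExtensionality.
From HB Require Import structures.
From mathcomp Require Import all_boot.
Set Implicit Arguments. Unset Strict Implicit. Unset Printing Implicit Defensive.

Section Aux.
Local Open Scope group_scope.

Lemma hom1 (H G : groupType) (f : H -> G) : is_hom f -> f 1 = 1.
Proof.
move=> hf; have := hf 1 1; rewrite mul1g => e.
by apply: (mulgI (f 1)); rewrite -e mulg1.
Qed.

Lemma homV (H G : groupType) (f : H -> G) (h : H) : is_hom f -> f h^-1 = (f h)^-1.
Proof.
move=> hf; apply: (mulgI (f h)); rewrite -hf mulgV mulgV; exact: hom1.
Qed.

Lemma shiftE (G : groupType) (A : Type) (g : G) (x : G -> A) k :
  shift g^-1 x k = x (g * k).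
Proof. by rewrite /shift invgK. Qed.

Section Constr.
Variables (A : Type) (G : groupType) (K : G -> Prop) (a b : A).
Hypothesis ab : a <> b.

Definition muK (y : {t : G | K t} -> A) : A :=
  if excluded_middle_informative (forall t, y t = a) then a else b.

Lemma muK_a y : muK y = a <-> (forall t, y t = a).
Proof.
rewrite /muK; case: excluded_middle_informative => H /=; split=> //.
by move=> e; exfalso; exact: ab (esym e).
Qed.

Lemma muK_ab y : muK y = a \/ muK y = b.
Proof. by rewrite /muK; case: excluded_middle_informative; auto. Qed.

Lemma muK_eq y z : (muK y = a <-> muK z = a) -> muK y = muK z.
Proof.
move=> [h1 h2]; case: (muK_ab y) => ey.
  by rewrite ey (h1 ey).
case: (muK_ab z) => ez; last by rewrite ey ez.
by rewrite (h2 ez) in ey.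
Qed.

Definition tauK (x : G -> A) (g : G) : A :=
  muK (fun t => shift g^-1 x (proj1_sig t)).

Lemma tauK_a x g : tauK x g = a <-> (forall k, K k -> x (g * k) = a).
Proof.
rewrite /tauK muK_a; split.
  by move=> h k Kk; have := h (exist _ k Kk); rewrite shiftE.
by move=> h [k Kk]; rewrite shiftE; apply: h.
Qed.

Lemma tauK_inv x g d : (forall k, K k -> K (d * k) /\ K (d^-1 * k)) ->
  tauK x (g * d) = tauK x g.
Proof.
move=> hK; apply: muK_eq; rewrite -/(tauK x (g * d)) -/(tauK x g) !tauK_a.
split=> h k Kk.
  have [_ K2] := hK k Kk.
  by have := h _ K2; rewrite -mulgA (mulgA d) mulgV mul1g.
have [K1 _] := hK k Kk.
by rewrite -mulgA; apply: h.
Qed.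
End Constr.


Lemma finite_dir (A : Type) (G H : groupType) (phi psi : H -> G) (K : G -> Prop) (a b : A) :
  a <> b -> finite_set K -> K 1 ->
  (forall d k, Delta phi psi d -> K k -> K (d * k) /\ K (d^-1 * k)) ->
  exists tau : (G -> A) -> (G -> A), [/\ is_CA tau, ~ is_constant tau &
      (fun x => pullback phi (tau x)) = (fun x => pullback psi (tau x))].
Proof.
move=> ab fK K1 hK; exists (tauK K a b); split.
- by exists K, (@muK _ _ K a b); split.
- move=> [c hc].
  have ea : tauK K a b (fun _ => a) 1 = a by apply/(tauK_a _ ab).
  have eb : tauK K a b (fun _ => b) 1 <> a.
    by move/(tauK_a _ ab) => h; apply: ab; rewrite -(h 1 K1).
  by apply: eb; rewrite hc -(hc (fun _ => a)).
- apply: functional_extensionality => x; apply: functional_extensionality => h.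
  rewrite /pullback.
  have -> : phi h = psi h * ((psi h)^-1 * phi h) by rewrite mulgA mulgV mul1g.
  apply: (@tauK_inv _ _ K a b ab) => k Kk; apply: hK => //; by exists h.
Qed.

Lemma infinite_dir (A : Type) (G H : groupType) (phi psi : H -> G)
  (tau : (G -> A) -> (G -> A)) (x0 : G -> A) :
  is_CA tau -> ~ finite_set (Delta phi psi) ->
  (fun x => pullback phi (tau x)) = (fun x => pullback psi (tau x)) ->
  is_constant tau.
Proof.
move=> [T [mu [[s Ts] htau]]] nfin eq.
have heq : forall x h, mu (fun t => x (phi h * proj1_sig t)) =
                         mu (fun t => x (psi h * proj1_sig t)).
  move=> x h; have := f_equal (fun F => F x h) eq; rewrite /pullback !htau.
  by rewrite /shift !invgK.
have [d [Dd dL]] : exists d, Delta phi psi d /\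
    d \notin [seq u * v^-1 | u <- s, v <- s].
  apply: NNPP => hn; apply: nfin; exists [seq u * v^-1 | u <- s, v <- s] => d Dd.
  apply: NNPP => dn; apply: hn; exists d; split => //; exact/negP.
case: Dd => h dE.
pose M (x : G -> A) := mu (fun t => x (proj1_sig t)).
have MM : forall x y, M x = M y.
  move=> x y.
  pose z k := if k \in s then x k else y (d^-1 * k).
  have Mz : M z = M x.
    rewrite /M; congr mu; apply: functional_extensionality => -[t Tt] /=.
    by rewrite /z (Ts _ Tt).
  have Mzy : M z = M y.
    have := heq (fun k => z ((psi h)^-1 * k)) h.
    have -> : (fun t : {t | T t} => z ((psi h)^-1 * (psi h * proj1_sig t)))
              = (fun t => z (proj1_sig t)).
      by apply: functional_extensionality => t; rewrite mulKg.
    rewrite /M => <-; congr mu; apply: functional_extensionality => -[t Tt] /=.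
    rewrite mulgA -dE /z.
    case: ifP => [dts|_]; last by rewrite mulKg.
    exfalso; move/negP: dL; apply.
    apply/allpairsP; exists (d * t, t); split => //; first exact: Ts.
    by rewrite /= mulgK.
  by rewrite -Mz Mzy.
exists (fun _ => M x0) => x; apply: functional_extensionality => g.
rewrite htau -(MM (fun k => x (g * k))) /M; congr mu.
by apply: functional_extensionality => t; rewrite shiftE.
Qed.

End Aux.

Section Main.
Local Open Scope group_scope.

Lemma Delta_abelian (G H : groupType) (phi psi : H -> G) :
  abelian_group G -> is_hom phi -> is_hom psi ->
  forall d k, Delta phi psi d -> Delta phi psi k ->
    Delta phi psi (d * k) /\ Delta phi psi (d^-1 * k).
Proof.
move=> ab hp hq.
have mulD : forall d k, Delta phi psi d -> Delta phi psi k -> Delta phi psi (d * k).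
  move=> _ _ [h ->] [h' ->]; exists (h * h').
  rewrite hp hq invgM.
  rewrite -!mulgA (mulgA (phi h)) (ab (phi h) (psi h')^-1) -mulgA.
  by rewrite !mulgA (ab (psi h)^-1).
move=> d k Dd Dk; split; first exact: mulD.
apply: mulD => //; case: Dd => h ->; exists h^-1.
by rewrite homV // homV // invgK invgM invgK ab.
Qed.

End Main.

Theorem proposition3p14 (A : finType) (G H : groupType) (phi psi : H -> G) :
  1 < #|A| ->
  abelian_group G \/ locally_finite G ->
  is_hom phi -> is_hom psi ->
  ((forall tau : (G -> A) -> (G -> A), is_CA tau -> ~ is_constant tau ->
      (fun x => pullback phi (tau x)) <> (fun x => pullback psi (tau x)))
   <-> ~ finite_set (Delta phi psi)).
Proof.
move=> /card_gt1P [a [b [_ _ /eqP ab]]] hG hp hq; split.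
- move=> Hall fin.
  have [K [fK K1 hK]] : exists K : G -> Prop, [/\ finite_set K, K 1%g &
     forall d k, Delta phi psi d -> K k -> K (d * k)%g /\ K (d^-1 * k)%g].
    case: hG => [abG|lf].
      exists (Delta phi psi); split => //.
        by exists 1%g; rewrite (hom1 hp) (hom1 hq) invg1 mulg1.
      exact: Delta_abelian.
    case: fin => s hs; exists (generated s); split => //.
      exact: gen_one.
    move=> d k Dd Kk; have gd := gen_in (hs _ Dd); split.
      exact: gen_mul.
    exact: gen_mul (gen_inv gd) Kk.
  have [tau [CA nc eq]] := finite_dir ab fK K1 hK.
  exact: Hall tau CA nc eq.
- move=> nfin tau CA nc eq; apply: nc.
  exact: (infinite_dir (fun _ => a) CA nfin eq).
Qed.
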